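(* Let $r\ge3$ be odd. For any $n\ge r$ and $A>0$, there exists $f\in C^r[-1,1]$ with $f\le0$ on $[-1,0]$ and $f\ge0$ on $[0,1]$, such that every algebraic polynomial $P_n$ of degree $\le n$ with $P_n\le0$ on $(-1/n,0)$ and $P_n^{(i)}(0)=f^{(i)}(0)$ for $0\le i\le r$ obeys $$\|f-P_n\|>A\,\|f^{(r)}\|.$$
   Context: $\|\cdot\|$ is the sup norm on $[-1,1]$. *)

(* Defs.v *)
From Stdlib Require Import Reals Lra.
From Coquelicot Require Import Coquelicot.
Open Scope R_scope.

Definition Cr (r : nat) (f : R -> R) : Prop :=
  (forall (k : nat) (x : R), (k <= r)%nat -> ex_derive_n f k x) /\
  (forall x : R, continuous (Derive_n f r) x).

Definition poly_eval (n : nat) (a : nat -> R) (x : R) : R :=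
  sum_f_R0 (fun k => a k * x ^ k) n.

Definition supnorm (g : R -> R) : R :=
  real (Lub_Rbar (fun y => exists x, -1 <= x <= 1 /\ y = Rabs (g x))).

(* Main.v *)
Require Import Defs.
From Stdlib Require Import Reals.
From Coquelicot Require Import Coquelicot.
From Stdlib Require Import Lra Lia Factorial.
Open Scope R_scope.

Definition smooth (h : R -> R) := forall k x, ex_derive_n h k x.

Lemma smooth_plus f g : smooth f -> smooth g -> smooth (fun x => f x + g x).
Proof. intros Hf Hg k x. apply ex_derive_n_plus; apply filter_forall; intros; auto. Qed.

Lemma Dn_plus f g k x : smooth f -> smooth g ->
  Derive_n (fun x => f x + g x) k x = Derive_n f k x + Derive_n g k x.
Proof. intros Hf Hg. apply Derive_n_plus; apply filter_forall; intros; auto. Qed.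

Lemma smooth_scal a f : smooth f -> smooth (fun x => a * f x).
Proof. intros Hf k x. apply ex_derive_n_scal_l; auto. Qed.

Lemma smooth_pow p : smooth (fun x => x ^ p).
Proof. intros k x. apply ex_derive_n_pow. Qed.

Lemma Dn_sin k a th x : Derive_n (fun x => sin (a*x+th)) k x = a^k * sin (a*x+th+INR k*(PI/2)).
Proof.
  revert x; induction k as [|k IH]; intros x.
  - simpl. rewrite Rmult_0_l, Rplus_0_r. ring.
  - simpl Derive_n. rewrite (Derive_ext _ (fun t => a^k * sin (a*t+th+INR k*(PI/2)))) by auto.
    apply is_derive_unique. auto_derive. all: try exact I.
    rewrite S_INR, cos_sin. simpl. replace (PI / 2 + (a * x + th + INR k * (PI / 2))) with (a * x + th + (INR k + 1) * (PI / 2)) by ring. ring.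
Qed.

Lemma smooth_sin a th : smooth (fun x => sin (a*x+th)).
Proof.
  intros k x. destruct k as [|k]; [exact I|]. simpl.
  apply (ex_derive_ext (fun t => a^k * sin (a*t+th+INR k*(PI/2)))).
  { intros t. symmetry. apply Dn_sin. }
  auto_derive; auto.
Qed.

Lemma poly_S N b x : poly_eval (S N) b x = poly_eval N b x + b (S N) * x ^ (S N).
Proof. reflexivity. Qed.

Lemma smooth_poly N b : smooth (poly_eval N b).
Proof.
  induction N as [|N IH].
  - intros k x. apply (ex_derive_n_ext (fun t => b 0%nat * t ^ 0)). { intros; reflexivity. }
    apply smooth_scal, smooth_pow.
  - intros k x. apply (ex_derive_n_ext (fun t => poly_eval N b t + b (S N) * t ^ (S N))).
    { intros; reflexivity. }
    apply smooth_plus; auto. apply smooth_scal, smooth_pow.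
Qed.

Lemma Dn_poly_big N b i x : (N < i)%nat -> Derive_n (poly_eval N b) i x = 0.
Proof.
  induction N as [|N IH]; intros H.
  - rewrite (Derive_n_ext _ (fun t => b 0%nat * t ^ 0)) by reflexivity.
    rewrite Derive_n_scal_l, Derive_n_pow_bigi by lia. ring.
  - rewrite (Derive_n_ext _ (fun t => poly_eval N b t + b (S N) * t ^ (S N))) by reflexivity.
    rewrite Dn_plus; [| apply smooth_poly | apply smooth_scal, smooth_pow].
    rewrite IH by lia. rewrite Derive_n_scal_l, Derive_n_pow_bigi by lia. ring.
Qed.

Lemma Dn_poly0 N b i : (i <= N)%nat -> Derive_n (poly_eval N b) i 0 = b i * INR (fact i).
Proof.
  induction N as [|N IH]; intros H.
  - assert (i = 0%nat) by lia. subst. unfold poly_eval. simpl. ring.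
  - rewrite (Derive_n_ext _ (fun t => poly_eval N b t + b (S N) * t ^ (S N))) by reflexivity.
    rewrite Dn_plus; [| apply smooth_poly | apply smooth_scal, smooth_pow].
    rewrite Derive_n_scal_l, Derive_n_pow.
    destruct (Compare_dec.le_dec i N) as [Hi|Hi].
    + rewrite IH by auto. destruct (Compare_dec.le_dec i (S N)); [|lia].
      replace (S N - i)%nat with (S (N - i)) by lia. simpl pow. ring.
    + assert (i = S N) by lia. subst. rewrite Dn_poly_big by lia.
      destruct (Compare_dec.le_dec (S N) (S N)); [|lia]. rewrite Nat.sub_diag. simpl pow.
      simpl fact at 2. rewrite Rmult_1_r. unfold Rdiv. simpl INR at 2. rewrite Rinv_1. ring.
Qed.

Lemma horner m a x : poly_eval (S m) a x = a 0%nat + x * poly_eval m (fun j => a (S j)) x.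
Proof.
  induction m as [|m IH].
  - unfold poly_eval; simpl. ring.
  - change (poly_eval (S (S m)) a x) with (poly_eval (S m) a x + a (S (S m)) * x ^ (S (S m))).
    rewrite IH. change (poly_eval (S m) (fun j => a (S j)) x) with
      (poly_eval m (fun j => a (S j)) x + a (S (S m)) * x ^ (S m)). simpl pow. ring.
Qed.

Lemma synth_div m : forall a al, exists b, forall x,
  poly_eval (S m) a x = poly_eval (S m) a al + (x - al) * poly_eval m b x.
Proof.
  induction m as [|m IH]; intros a al.
  - exists (fun _ => a 1%nat). intros x. unfold poly_eval; simpl. ring.
  - destruct (IH (fun j => a (S j)) al) as [b1 Hb1].
    exists (fun j => match j with 0%nat => poly_eval (S m) (fun j => a (S j)) al | S j => b1 j end).
    intros x. rewrite (horner (S m) a x), (horner (S m) a al), (Hb1 x), (horner m _ x).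
    simpl. change (poly_eval m (fun j => b1 j) x) with (poly_eval m b1 x). ring.
Qed.

Lemma extrap m : forall al be L, al < be -> 0 <= L -> exists C, 0 <= C /\ forall a B,
  (forall y, al <= y <= be -> Rabs (poly_eval m a y) <= B) ->
  forall x, Rabs x <= L -> Rabs (poly_eval m a x) <= C * B.
Proof.
  induction m as [|m IH]; intros al be L Hab HL0.
  - exists 1. split; [lra|]. intros a B HB x Hx.
    specialize (HB al ltac:(lra)). unfold poly_eval in *; simpl in *. lra.
  - destruct (IH ((al+be)/2) be L ltac:(lra) HL0) as [C1 [HC1 H1]].
    set (d := (be - al)/2).
    assert (Hd : 0 < d) by (unfold d; lra).
    exists (1 + (L + Rabs al) * C1 * (2 / d)). split.
    { assert (0 <= L + Rabs al) by (pose proof (Rabs_pos al); lra).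
      apply Rplus_le_le_0_compat; [lra|]. apply Rmult_le_pos; [apply Rmult_le_pos; auto|].
      apply Rlt_le, Rdiv_lt_0_compat; lra. }
    intros a B HB x Hx.
    destruct (synth_div m a al) as [b Hb].
    assert (HB0 : Rabs (poly_eval (S m) a al) <= B) by (apply HB; lra).
    assert (Hq : forall y, (al+be)/2 <= y <= be -> Rabs (poly_eval m b y) <= 2 * B / d).
    { intros y Hy. specialize (HB y ltac:(lra)). rewrite Hb in HB.
      assert (Hy2 : Rabs (y - al) >= d) by (rewrite Rabs_right; unfold d; lra).
      assert (Rabs ((y - al) * poly_eval m b y) <= 2 * B).
      { replace ((y - al) * poly_eval m b y) with
          ((poly_eval (S m) a al + (y - al) * poly_eval m b y) - poly_eval (S m) a al) by ring.
        eapply Rle_trans; [apply Rabs_triang|]. rewrite Rabs_Ropp. lra. }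
      rewrite Rabs_mult in H.
      apply (Rmult_le_reg_l d); [lra|]. unfold Rdiv.
      replace (d * (2 * B * / d)) with (2 * B) by (field; lra).
      eapply Rle_trans; [|apply H]. apply Rmult_le_compat_r; [apply Rabs_pos|lra]. }
    specialize (H1 b _ Hq x Hx).
    rewrite Hb. eapply Rle_trans; [apply Rabs_triang|]. rewrite Rabs_mult.
    assert (Rabs (x - al) <= L + Rabs al).
    { eapply Rle_trans; [apply Rabs_triang|]. rewrite Rabs_Ropp. lra. }
    assert (0 <= B) by (eapply Rle_trans; [apply Rabs_pos|apply HB0]).
    assert (Rabs (x - al) * Rabs (poly_eval m b x) <= (L + Rabs al) * (C1 * (2 * B / d))).
    { apply Rmult_le_compat; auto using Rabs_pos. }
    replace ((1 + (L + Rabs al) * C1 * (2 / d)) * B) with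
      (B + (L + Rabs al) * (C1 * (2 * B / d))) by (field; lra).
    lra.
Qed.

Lemma pow_abs_le1 y k : Rabs y <= 1 -> Rabs (y ^ k) <= 1.
Proof. intros H. rewrite <- RPow_abs. rewrite <- (pow1 k). apply pow_incr. split; auto using Rabs_pos. Qed.

Lemma poly_bound N b M y : (forall j, (j <= N)%nat -> Rabs (b j) <= M) -> Rabs y <= 1 ->
  Rabs (poly_eval N b y) <= INR (S N) * M.
Proof.
  intros Hb Hy. induction N as [|N IH].
  - unfold poly_eval; simpl. rewrite Rmult_1_r, Rmult_1_l. apply Hb; lia.
  - change (poly_eval (S N) b y) with (poly_eval N b y + b (S N) * y ^ (S N)).
    eapply Rle_trans; [apply Rabs_triang|]. rewrite Rabs_mult.
    assert (Rabs (b (S N)) * Rabs (y ^ S N) <= M * 1).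
    { apply Rmult_le_compat; auto using Rabs_pos, pow_abs_le1. }
    rewrite S_INR. specialize (IH (fun j Hj => Hb j ltac:(lia))). lra.
Qed.

Lemma poly_split r m a x : poly_eval (S r + m) a x =
  poly_eval r a x + x ^ (S r) * poly_eval m (fun j => a (j + S r)%nat) x.
Proof.
  induction m as [|m IH].
  - rewrite Nat.add_0_r. unfold poly_eval; simpl. ring.
  - rewrite Nat.add_succ_r.
    change (poly_eval (S (S r + m)) a x) with (poly_eval (S r + m) a x + a (S (S r + m)) * x ^ (S (S r + m))).
    change (poly_eval (S m) (fun j => a (j + S r)%nat) x) with
      (poly_eval m (fun j => a (j + S r)%nat) x + a (S m + S r)%nat * x ^ (S m)).
    rewrite IH. replace (S m + S r)%nat with (S (S r + m)) by lia.
    replace (S (S r + m)) with (S r + S m)%nat at 2 by lia. rewrite pow_add. ring.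
Qed.

Lemma sum_zero f N : (forall i, (i <= N)%nat -> f i = 0) -> sum_f_R0 f N = 0.
Proof.
  intros H. induction N as [|N IH]; simpl.
  - apply H; lia.
  - rewrite IH by (intros; apply H; lia). rewrite H by lia. ring.
Qed.

Lemma supnorm_ub g M : (forall x, -1 <= x <= 1 -> Rabs (g x) <= M) ->
  forall x, -1 <= x <= 1 -> Rabs (g x) <= supnorm g.
Proof.
  intros HM x Hx. unfold supnorm.
  destruct (Lub_Rbar_correct (fun y => exists x, -1 <= x <= 1 /\ y = Rabs (g x))) as [Hub Hl].
  assert (H1 : Rbar_le (Rabs (g x)) (Lub_Rbar (fun y => exists x, -1 <= x <= 1 /\ y = Rabs (g x)))).
  { apply Hub. exists x; auto. }
  assert (H2 : Rbar_le (Lub_Rbar (fun y => exists x, -1 <= x <= 1 /\ y = Rabs (g x))) M).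
  { apply Hl. intros y [z [Hz ->]]. simpl. auto. }
  destruct (Lub_Rbar _); simpl in *; auto; contradiction.
Qed.

Lemma supnorm_le g M : (forall x, -1 <= x <= 1 -> Rabs (g x) <= M) -> supnorm g <= M.
Proof.
  intros HM. unfold supnorm.
  destruct (Lub_Rbar_correct (fun y => exists x, -1 <= x <= 1 /\ y = Rabs (g x))) as [Hub Hl].
  assert (H1 : Rbar_le (Rabs (g 0)) (Lub_Rbar (fun y => exists x, -1 <= x <= 1 /\ y = Rabs (g x)))).
  { apply Hub. exists 0; split; [lra|auto]. }
  assert (H2 : Rbar_le (Lub_Rbar (fun y => exists x, -1 <= x <= 1 /\ y = Rabs (g x))) M).
  { apply Hl. intros y [z [Hz ->]]. simpl. auto. }
  destruct (Lub_Rbar _); simpl in *; auto; contradiction.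
Qed.

Lemma taylor_sign (h : R -> R) (q : nat) :
  (forall k x, ex_derive_n h k x) ->
  (forall j, (j <= q)%nat -> Derive_n h j 0 = 0) ->
  (forall z, 0 <= Derive_n h (S q) z) -> forall y, 0 <= y -> 0 <= h y.
Proof.
  intros Hs H0 Hpos y Hy.
  destruct (Req_dec y 0) as [->|Hy0].
  { assert (E := H0 0%nat ltac:(lia)). simpl in E. lra. }
  destruct (Taylor_Lagrange h q 0 y ltac:(lra) (fun t _ k _ => Hs k t)) as [z [Hz ->]].
  rewrite sum_zero. 2: { intros i Hi. rewrite H0 by auto. ring. }
  rewrite Rplus_0_l. apply Rmult_le_pos; [|auto].
  apply Rmult_le_pos; [apply pow_le; lra|]. apply Rlt_le, Rinv_0_lt_compat, INR_fact_lt_0.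
Qed.

Lemma cos_quad u : 0 <= cos u + 4/9 * u ^ 2.
Proof.
  pose proof PI2_3_2. pose proof (COS_bound u).
  destruct (Rle_dec (Rabs u) (3/2)) as [Hu|Hu].
  - assert (0 <= cos u) by (apply Rabs_le_between in Hu; apply cos_ge_0; lra).
    assert (0 <= u^2) by (apply pow2_ge_0). lra.
  - assert (9/4 <= u ^ 2).
    { apply Rnot_le_lt in Hu. replace (u^2) with (Rabs u * Rabs u).
      2: { rewrite <- Rabs_mult. simpl. rewrite Rmult_1_r. apply Rabs_right. apply Rle_ge, Rle_0_sqr. }
      nra. }
    lra.
Qed.

Lemma F_smooth K a th N b c r : smooth (fun x => K * sin (a*x+th) + poly_eval N b x + c * x ^ r).
Proof.
  apply smooth_plus; [apply smooth_plus|].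
  - apply smooth_scal, smooth_sin.
  - apply smooth_poly.
  - apply smooth_scal, smooth_pow.
Qed.

Lemma F_Dn K a th N b c r k x :
  Derive_n (fun x => K * sin (a*x+th) + poly_eval N b x + c * x ^ r) k x =
  K * (a^k * sin (a*x+th+INR k*(PI/2))) + Derive_n (poly_eval N b) k x + c * Derive_n (fun x => x ^ r) k x.
Proof.
  rewrite Dn_plus; [| apply smooth_plus; [apply smooth_scal, smooth_sin| apply smooth_poly] | apply smooth_scal, smooth_pow].
  rewrite Dn_plus; [| apply smooth_scal, smooth_sin| apply smooth_poly].
  rewrite !Derive_n_scal_l, Dn_sin. reflexivity.
Qed.

Lemma pow_inv_sub d N k : d <> 0 -> (k <= N)%nat -> d ^ N * (/ d) ^ k = d ^ (N - k).
Proof.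
  intros Hd Hk. replace N with ((N - k) + k)%nat at 1 by lia. rewrite pow_add, pow_inv.
  replace (N - k + k - k)%nat with (N - k)%nat by lia. field. apply pow_nonzero; auto.
Qed.

Lemma pow_le1 d k : 0 <= d <= 1 -> d ^ k <= 1.
Proof. intros H. rewrite <- (pow1 k). apply pow_incr. lra. Qed.

Lemma fact_ge1 k : 1 <= INR (fact k).
Proof. apply (le_INR 1). apply lt_O_fact. Qed.

Lemma poly_bound2 N b y : Rabs y <= 1 -> Rabs (poly_eval N b y) <= sum_f_R0 (fun j => Rabs (b j)) N.
Proof.
  intros Hy. induction N as [|N IH].
  - unfold poly_eval; simpl. rewrite Rmult_1_r. lra.
  - change (poly_eval (S N) b y) with (poly_eval N b y + b (S N) * y ^ (S N)). simpl sum_f_R0.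
    eapply Rle_trans; [apply Rabs_triang|]. rewrite Rabs_mult.
    assert (Rabs (b (S N)) * Rabs (y ^ S N) <= Rabs (b (S N)) * 1).
    { apply Rmult_le_compat_l; auto using Rabs_pos, pow_abs_le1. }
    lra.
Qed.

Theorem lemma3p13 (r : nat) (Hr : (3 <= r)%nat) (Hodd : Nat.Odd r)
  (n : nat) (Hn : (r <= n)%nat) (A : R) (HA : 0 < A) :
  exists f : R -> R,
    Cr r f /\
    (forall x, -1 <= x <= 0 -> f x <= 0) /\
    (forall x, 0 <= x <= 1 -> 0 <= f x) /\
    forall a : nat -> R,
      (forall x, - / INR n < x < 0 -> poly_eval n a x <= 0) ->
      (forall i, (i <= r)%nat ->
         Derive_n (poly_eval n a) i 0 = Derive_n f i 0) ->
      supnorm (fun x => f x - poly_eval n a x) > A * supnorm (Derive_n f r).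
Proof.
  destruct Hodd as [k Hk]. destruct k as [|q]; [lia|].
  set (p := (2 * q)%nat).
  assert (Hrp : r = S (S (S p))) by (unfold p; lia).
  destruct (extrap (n - S r) (1/2) 1 1 ltac:(lra) ltac:(lra)) as [C [HC0 HC]].
  set (B := 2 ^ (S r) * (2 * A + INR p + 5)).
  set (Fp := INR (fact (S p))).
  assert (HFp : 1 <= Fp) by apply fact_ge1.
  set (W := 27 * INR r ^ 3 * (INR p + 2) * Fp).
  assert (HB0 : 0 <= B).
  { unfold B. apply Rmult_le_pos; [apply pow_le; lra|]. pose proof (pos_INR p). lra. }
  assert (HW0 : 0 <= W).
  { unfold W. pose proof (pos_INR p). pose proof (pos_INR r).
    apply Rmult_le_pos; [|lra]. apply Rmult_le_pos; [|lra]. apply Rmult_le_pos; [lra|]. apply pow_le; lra. }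
  assert (Hrpos : 3 <= INR r) by (replace 3 with (INR 3) by (simpl; lra); apply le_INR; lia).
  assert (Hnpos : 3 <= INR n) by (replace 3 with (INR 3) by (simpl; lra); apply le_INR; lia).
  set (D := 1 + 3 * INR r * INR n + W * C * B).
  assert (HD : 1 <= D).
  { unfold D. assert (0 <= W * C * B) by (apply Rmult_le_pos; [apply Rmult_le_pos|]; auto). nra. }
  set (del := / D).
  assert (Hdel : 0 < del) by (apply Rinv_0_lt_compat; lra).
  assert (Hdel1 : del <= 1).
  { unfold del. rewrite <- Rinv_1. apply Rinv_le_contravar; lra. }
  assert (HdelD : del * D = 1) by (unfold del; field; lra).
  set (ia := / del).
  set (th := - INR p * (PI / 2)).
  set (c := 8 / (9 * INR (fact r))).
  set (b := fun j => if Compare_dec.le_dec j p then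
        - (del ^ r * (ia ^ j * sin (ia * 0 + th + INR j * (PI / 2)))) / INR (fact j) else 0).
  set (f := fun x => del ^ r * sin (ia * x + th) + poly_eval p b x + c * x ^ r).
  assert (Hsm : smooth f) by apply F_smooth.

  assert (HDf : forall k x, Derive_n f k x = del^r * (ia^k * sin (ia*x+th+INR k*(PI/2))) + Derive_n (poly_eval p b) k x + c * Derive_n (fun x => x^r) k x).
  { intros; unfold f; apply F_Dn. }
  assert (Hpw : forall k, (k <= r)%nat -> del^r * ia^k = del^(r-k)).
  { intros; unfold ia; apply pow_inv_sub; [lra|lia]. }
  assert (Hfr : INR (fact r) <> 0) by apply INR_fact_neq_0.
  assert (D1 : forall j, (j <= p)%nat -> Derive_n f j 0 = 0).
  { intros j Hj. rewrite HDf, Dn_poly0 by lia. rewrite Derive_n_pow_smalli by lia.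
    rewrite (pow_i (r - j)) by lia. unfold b. destruct (Compare_dec.le_dec j p); [|lia].
    field. split; apply INR_fact_neq_0. }
  assert (D2 : Derive_n f (S p) 0 = del ^ 2).
  { rewrite HDf, Dn_poly_big by lia. rewrite Derive_n_pow_smalli by lia.
    rewrite (pow_i (r - S p)) by lia. rewrite <- Rmult_assoc, Hpw by lia.
    replace (r - S p)%nat with 2%nat by lia.
    replace (ia * 0 + th + INR (S p) * (PI / 2)) with (PI / 2) by (unfold th; rewrite S_INR; ring).
    rewrite sin_PI2. ring. }
  assert (D3 : Derive_n f (S (S p)) 0 = 0).
  { rewrite HDf, Dn_poly_big by lia. rewrite Derive_n_pow_smalli by lia.
    rewrite (pow_i (r - S (S p))) by lia. rewrite <- Rmult_assoc, Hpw by lia.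
    replace (ia * 0 + th + INR (S (S p)) * (PI / 2)) with PI by (unfold th; rewrite !S_INR; field).
    rewrite sin_PI. ring. }
  assert (D4 : Derive_n f r 0 = - / 9).
  { rewrite HDf, Dn_poly_big by lia. rewrite Derive_n_pow_smalli by lia.
    rewrite <- Rmult_assoc, Hpw by lia. rewrite Nat.sub_diag.
    replace (ia * 0 + th + INR r * (PI / 2)) with (3 * (PI / 2)) by (unfold th; rewrite Hrp, !S_INR; field).
    rewrite sin_3PI2. unfold c. simpl pow. simpl fact. simpl INR. field. auto. }
  assert (D5 : forall z, 0 <= Derive_n f (S p) z).
  { intros z. rewrite HDf, Dn_poly_big by lia. rewrite Derive_n_pow_smalli by lia.
    rewrite <- Rmult_assoc, Hpw by lia. replace (r - S p)%nat with 2%nat by lia.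
    replace (ia * z + th + INR (S p) * (PI / 2)) with (PI / 2 + ia * z) by (unfold th; rewrite S_INR; ring).
    rewrite <- cos_sin.
    replace (del ^ 2 * cos (ia * z) + 0 + c * (INR (fact r) / INR (fact 2) * z ^ 2))
      with (del ^ 2 * (cos (ia * z) + 4 / 9 * (ia * z) ^ 2)).
    2: { unfold c, ia. simpl fact. simpl INR. field. split; [auto|lra]. }
    apply Rmult_le_pos; [apply pow_le; lra| apply cos_quad]. }
  assert (D6 : forall x, Rabs (Derive_n f r x) <= 2).
  { intros x. rewrite HDf, Dn_poly_big by lia. rewrite Derive_n_pow_smalli by lia.
    rewrite <- Rmult_assoc, Hpw by lia. rewrite Nat.sub_diag. simpl pow. simpl fact.
    replace (c * (INR (fact r) / INR 1 * 1)) with (8/9) by (unfold c; simpl INR; field; auto).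
    pose proof (SIN_bound (ia * x + th + INR r * (PI / 2))). apply Rabs_le. lra. }

  assert (Hc : 0 < c <= 1).
  { unfold c. pose proof (fact_ge1 r). split.
    - apply Rdiv_lt_0_compat; lra.
    - apply (Rmult_le_reg_r (9 * INR (fact r))); [lra|]. unfold Rdiv. rewrite Rmult_assoc, Rinv_l by lra. lra. }
  assert (Hbj : forall j, (j <= p)%nat -> Rabs (b j) <= 1).
  { intros j Hj. unfold b. destruct (Compare_dec.le_dec j p); [|lia].
    rewrite <- Rmult_assoc, Hpw by lia. pose proof (fact_ge1 j).
    unfold Rdiv. rewrite Rabs_mult, Rabs_Ropp, Rabs_mult, Rabs_inv, (Rabs_pos_eq (INR (fact j))) by lra.
    assert (Rabs (del ^ (r - j)) <= 1) by (rewrite Rabs_pos_eq by (apply pow_le; lra); apply pow_le1; lra).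
    assert (Rabs (sin (ia * 0 + th + INR j * (PI / 2))) <= 1) by (apply Rabs_le; apply SIN_bound).
    assert (0 < / INR (fact j) <= 1).
    { split; [apply Rinv_0_lt_compat; lra|]. rewrite <- Rinv_1. apply Rinv_le_contravar; lra. }
    assert (Rabs (del ^ (r - j)) * Rabs (sin (ia * 0 + th + INR j * (PI / 2))) <= 1 * 1)
      by (apply Rmult_le_compat; auto using Rabs_pos).
    assert (0 <= Rabs (del ^ (r - j)) * Rabs (sin (ia * 0 + th + INR j * (PI / 2))))
      by (apply Rmult_le_pos; apply Rabs_pos).
    nra. }
  assert (Hfb : forall y, Rabs y <= 1 -> Rabs (f y) <= INR p + 3).
  { intros y Hy. unfold f.
    pose proof (poly_bound p b 1 y Hbj Hy) as Hpb. rewrite S_INR in Hpb.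
    assert (Rabs (del ^ r * sin (ia * y + th)) <= 1).
    { rewrite Rabs_mult. rewrite <- (Rmult_1_l 1). apply Rmult_le_compat; auto using Rabs_pos.
      - rewrite Rabs_pos_eq by (apply pow_le; lra). apply pow_le1; lra.
      - apply Rabs_le, SIN_bound. }
    assert (Rabs (c * y ^ r) <= 1).
    { rewrite Rabs_mult. rewrite <- (Rmult_1_l 1). apply Rmult_le_compat; auto using Rabs_pos, pow_abs_le1.
      rewrite Rabs_pos_eq; lra. }
    eapply Rle_trans; [apply Rabs_triang|]. eapply Rle_trans; [apply Rplus_le_compat_r, Rabs_triang|]. lra. }
  exists f. split; [split|split; [|split]].
  - intros k x _. apply Hsm.
  - intros x. exact (ex_derive_continuous (Derive_n f r) x (Hsm (S r) x)).
  - intros x Hx.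
    set (h := fun t => - f (- t)).
    assert (Hh : smooth h).
    { intros k y. unfold h. apply (ex_derive_n_opp (fun t => f (- t))).
      apply ex_derive_n_comp_opp. apply filter_forall; intros; apply Hsm. }
    assert (HDh : forall k t, Derive_n h k t = - ((-1) ^ k * Derive_n f k (- t))).
    { intros k t. unfold h. rewrite (Derive_n_opp (fun t => f (- t))).
      rewrite Derive_n_comp_opp; [reflexivity|]. apply filter_forall; intros; apply Hsm. }
    assert (H0 : 0 <= h (- x)).
    { apply (taylor_sign h p Hh).
      - intros j Hj. rewrite HDh, Ropp_0, D1 by auto. ring.
      - intros z. rewrite HDh. unfold p. rewrite pow_1_odd. specialize (D5 (- z)). unfold p in D5. lra.
      - lra. }
    unfold h in H0. rewrite Ropp_involutive in H0. lra.
  - intros x Hx. apply (taylor_sign f p Hsm D1 D5). lra.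

  - intros a HP Hder. apply Rnot_le_gt. intros Hcon.
    assert (Ha : forall i, (i <= r)%nat -> a i = Derive_n f i 0 / INR (fact i)).
    { intros i Hi. rewrite <- Hder by auto. rewrite Dn_poly0 by lia. field. apply INR_fact_neq_0. }
    assert (Hsum : forall g, sum_f_R0 g r = sum_f_R0 g p + g (S p) + g (S (S p)) + g r).
    { intros g. rewrite Hrp. reflexivity. }
    assert (HT : forall x, poly_eval r a x = del ^ 2 / Fp * x ^ (S p) - / 9 / INR (fact r) * x ^ r).
    { intros x. unfold poly_eval. rewrite (sum_eq _ (fun k => Derive_n f k 0 / INR (fact k) * x ^ k) r).
      2: { intros i Hi. rewrite Ha by auto. reflexivity. }
      rewrite Hsum, sum_zero. 2: { intros i Hi. rewrite D1 by lia. unfold Rdiv. ring. }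
      rewrite D2, D3, D4. unfold Fp. field. repeat split; apply INR_fact_neq_0. }
    assert (Hsmall : forall u v, 0 <= u <= 1 -> Rabs v <= 1 -> Rabs (u * v) <= 1).
    { intros u v Hu Hv. rewrite Rabs_mult, Rabs_pos_eq by lra. rewrite <- (Rmult_1_l 1).
      apply Rmult_le_compat; lra || auto using Rabs_pos. }
    assert (HTb : forall y, Rabs y <= 1 -> Rabs (poly_eval r a y) <= 2).
    { intros y Hy. rewrite HT. unfold Rminus. eapply Rle_trans; [apply Rabs_triang|].
      rewrite Rabs_Ropp. pose proof (fact_ge1 r) as Hf1.
      assert (Hu1 : 0 <= del ^ 2 / Fp <= 1).
      { split. apply Rmult_le_pos; [apply pow_le; lra| apply Rlt_le, Rinv_0_lt_compat; lra].
        apply (Rmult_le_reg_r Fp); [lra|]. unfold Rdiv. rewrite Rmult_assoc, Rinv_l by lra.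
        assert (del ^ 2 <= 1) by (apply pow_le1; lra). nra. }
      assert (Hu2 : 0 <= / 9 / INR (fact r) <= 1).
      { split. apply Rmult_le_pos; [lra| apply Rlt_le, Rinv_0_lt_compat; lra].
        apply (Rmult_le_reg_r (INR (fact r))); [lra|]. unfold Rdiv. rewrite Rmult_assoc, Rinv_l by lra. lra. }
      pose proof (Hsmall _ _ Hu1 (pow_abs_le1 y (S p) Hy)).
      pose proof (Hsmall _ _ Hu2 (pow_abs_le1 y r Hy)). lra. }
    set (s := 3 * INR r * del).
    assert (Hs : 0 < s) by (unfold s; nra).
    assert (HDexp : del * D = del + del * (3 * INR r * INR n) + W * C * B * del) by (unfold D; ring).
    assert (HWCB : 0 <= W * C * B * del) by (apply Rmult_le_pos; [apply Rmult_le_pos; [apply Rmult_le_pos|]|]; lra).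
    assert (Hsn : s * INR n < 1).
    { unfold s. assert (0 <= del * (3 * INR r * INR n)) by (apply Rmult_le_pos; nra). nra. }
    assert (Hs1 : s < 1) by nra.
    assert (Hx0 : - / INR n < - s < 0).
    { split; [|lra]. apply Ropp_lt_contravar.
      replace s with (s * INR n * / INR n) by (field; lra).
      rewrite <- (Rmult_1_l (/ INR n)) at 2. apply Rmult_lt_compat_r; [apply Rinv_0_lt_compat; lra|auto]. }
    assert (Hms : forall k, (- s) ^ k = (-1) ^ k * s ^ k).
    { intros k. rewrite <- Rpow_mult_distr. f_equal. ring. }
    assert (HT0 : poly_eval r a (- s) = s ^ (S p) * del ^ 2 / (Fp * (INR p + 2))).
    { assert (Hm1r : (-1)^r = -1) by (replace r with (S (2 * S q)) by lia; apply pow_1_odd).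
      assert (Hm1p : (-1)^(S p) = -1) by (unfold p; apply pow_1_odd).
      assert (Hsr : s^r = s^(S p) * s^2) by (rewrite <- pow_add; f_equal; lia).
      assert (Hfr3 : INR (fact r) = (INR p + 3) * (INR p + 2) * Fp).
      { rewrite Hrp. rewrite (fact_simpl (S (S p))), (fact_simpl (S p)), !mult_INR.
        unfold Fp. rewrite !S_INR. ring. }
      assert (Hr3 : INR r = INR p + 3) by (rewrite Hrp, !S_INR; ring).
      rewrite HT, !Hms, Hm1r, Hm1p, Hsr, Hfr3. unfold s. rewrite Hr3. pose proof (pos_INR p).
      field. repeat split; lra. }
    assert (HT0pos : 0 < poly_eval r a (- s)).
    { rewrite HT0. apply Rdiv_lt_0_compat.
      - apply Rmult_lt_0_compat; [apply pow_lt; lra | apply pow_lt; lra].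
      - pose proof (pos_INR p). apply Rmult_lt_0_compat; lra. }
    specialize (HP (- s) Hx0).
    destruct (Nat.eq_dec n r) as [Hnr|Hnr].
    { rewrite Hnr in HP. lra. }
    set (Q := poly_eval (n - S r) (fun j => a (j + S r)%nat)).
    assert (Hsplit : forall x, poly_eval n a x = poly_eval r a x + x ^ (S r) * Q x).
    { intros x. unfold Q. rewrite <- poly_split. replace (S r + (n - S r))%nat with n by lia. reflexivity. }
    assert (HsupD : supnorm (Derive_n f r) <= 2) by (apply supnorm_le; auto).
    assert (HfP : forall y, -1 <= y <= 1 -> Rabs (f y - poly_eval n a y) <= 2 * A).
    { intros y Hy.
      assert (Hub : forall x, -1 <= x <= 1 -> Rabs (f x - poly_eval n a x) <= INR p + 3 + sum_f_R0 (fun j => Rabs (a j)) n).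
      { intros x Hx'. unfold Rminus. eapply Rle_trans; [apply Rabs_triang|]. rewrite Rabs_Ropp.
        assert (Rabs x <= 1) by (apply Rabs_le; lra).
        pose proof (Hfb x H). pose proof (poly_bound2 n a x H). lra. }
      pose proof (supnorm_ub _ _ Hub y Hy). nra. }
    assert (HQb : forall y, 1/2 <= y <= 1 -> Rabs (Q y) <= B).
    { intros y Hy.
      assert (Hy1 : Rabs y <= 1) by (apply Rabs_le; lra).
      assert (H1 : Rabs (y ^ (S r) * Q y) <= 2 * A + INR p + 5).
      { replace (y ^ (S r) * Q y) with (poly_eval n a y - poly_eval r a y) by (rewrite Hsplit; ring).
        unfold Rminus. eapply Rle_trans; [apply Rabs_triang|]. rewrite Rabs_Ropp.
        pose proof (HTb y Hy1). pose proof (Hfb y Hy1). pose proof (HfP y ltac:(lra)).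
        replace (poly_eval n a y) with (f y - (f y - poly_eval n a y)) by ring.
        pose proof (Rabs_triang (f y) (- (f y - poly_eval n a y))) as Htr. rewrite Rabs_Ropp in Htr. unfold Rminus in *. lra. }
      rewrite Rabs_mult in H1.
      assert (H2 : (1/2) ^ (S r) <= Rabs (y ^ S r)).
      { rewrite <- RPow_abs. apply pow_incr. rewrite Rabs_pos_eq; lra. }
      assert (H3 : (1/2) ^ (S r) * Rabs (Q y) <= 2 * A + INR p + 5).
      { eapply Rle_trans; [|apply H1]. apply Rmult_le_compat_r; auto using Rabs_pos. }
      unfold B. replace (Rabs (Q y)) with (2 ^ (S r) * ((1/2) ^ (S r) * Rabs (Q y))).
      2: { rewrite <- Rmult_assoc, <- Rpow_mult_distr. replace (2 * (1/2)) with 1 by field. rewrite pow1. ring. }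
      apply Rmult_le_compat_l; [apply pow_le; lra|auto]. }
    assert (HQ0 : Rabs (Q (- s)) <= C * B).
    { apply (HC _ B HQb). rewrite Rabs_Ropp, Rabs_pos_eq; lra. }
    rewrite Hsplit in HP.
    assert (H1 : poly_eval r a (- s) <= s ^ (S r) * (C * B)).
    { assert (poly_eval r a (- s) <= Rabs ((- s) ^ S r * Q (- s))).
      { pose proof (Rle_abs (- ((- s) ^ S r * Q (- s)))). rewrite Rabs_Ropp in H. lra. }
      rewrite Rabs_mult, <- RPow_abs, Rabs_Ropp, Rabs_pos_eq in H by lra.
      eapply Rle_trans; [apply H|]. apply Rmult_le_compat_l; [apply pow_le; lra|auto]. }
    rewrite HT0 in H1. replace (S r) with (S p + 3)%nat in H1 by lia. rewrite pow_add in H1.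
    assert (H2 : del ^ 2 / (Fp * (INR p + 2)) <= s ^ 3 * (C * B)).
    { apply (Rmult_le_reg_l (s ^ S p)); [apply pow_lt; lra|].
      replace (s ^ S p * (del ^ 2 / (Fp * (INR p + 2)))) with (s ^ S p * del ^ 2 / (Fp * (INR p + 2)))
        by (field; pose proof (pos_INR p); lra).
      rewrite <- Rmult_assoc. exact H1. }
    assert (H3 : 1 <= W * C * B * del).
    { replace (W * C * B * del) with ((s ^ 3 * (C * B)) * ((Fp * (INR p + 2)) / del ^ 2)).
      2: { unfold W, s. field. lra. }
      replace 1 with ((del ^ 2 / (Fp * (INR p + 2))) * ((Fp * (INR p + 2)) / del ^ 2)).
      2: { field. pose proof (pos_INR p). lra. }
      apply Rmult_le_compat_r; auto.
      apply Rlt_le, Rdiv_lt_0_compat; [pose proof (pos_INR p); nra| apply pow_lt; lra]. }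
    assert (0 <= del * (3 * INR r * INR n)) by (apply Rmult_le_pos; nra).
    lra.
Qed.
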